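(* Let $K^1,K^2$, $\Theta^1,\Theta^2$, $\tau^1,\tau^2$, $\eta^{\{1,2\}}$ and the deterministic functions $\Lambda^{1},\Lambda^{2},\Lambda^{\{1,2\}}$ be as described in the context. Then for all $t_1,t_2,t$ with $0\le t\le \min(t_1,t_2)$, $$ \mathbb P(\tau^1>t_1,\tau^2>t_2\mid\mathcal F_t)= \begin{cases} \exp\left\{-\Lambda^{2}_{t_2}-\left(\Lambda^{\{1,2\}}_{t_1}-\Lambda^{2}_{t_1}\right)\right\}\eta^{\{1,2\}}_t, & \text{if } t_1\le t_2,\\[2pt] \exp\left\{-\Lambda^{1}_{t_1}-\left(\Lambda^{\{1,2\}}_{t_2}-\Lambda^{1}_{t_2}\right)\right\}\eta^{\{1,2\}}_t, & \text{if } t_2< t_1. \end{cases} $$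
   Context: Let $(\Omega,\mathcal G,\mathbb F,\mathbb P)$ be a filtered probability space, $\mathbb F=(\mathcal F_t)_{t\ge0}$ satisfying the usual conditions. For $i=1,2$, let $K^i$ be an $\mathbb F$-adapted, càdlàg, increasing process with $K^i_0=0$ (the processes $K^1,K^2$ may be dependent), and let $\Theta^1,\Theta^2$ be unit exponential random variables, independent of each other and of $\mathcal F_\infty$. Define $\tau^i:=\inf\{t\ge0: K^i_t\ge\Theta^i\}$, so that $\mathbb P(\tau^i>t\mid\mathcal F_t)=e^{-K^i_t}$. Put $K^{\{1,2\}}:=K^1+K^2$. For $J\in\{\{1\},\{2\},\{1,2\}\}$ (writing $K^{\{i\}}=K^i$), let $K^{J,c}$ be the continuous part of $K^J$, let $I^J_t:=\sum_{s\le t}(1-e^{-\Delta K^J_s})$ with canonical decomposition $I^J=M^{I^J}+A^{I^J}$ ($M^{I^J}$ an $\mathbb F$-local martingale, $A^{I^J}$ $\mathbb F$-predictable of finite variation), and set $\Lambda^J:=K^{J,c}+A^{I^J}$. Standing assumptions: for each such $J$, $K^{J,c}$ and $A^{I^J}$ are deterministic, $\Lambda^J$ is continuous (as holds when the associated random times are totally inaccessible), and the multiplicative decomposition $e^{-K^J_t}=\eta^J_t e^{-\Lambda^J_t}$ holds with $\eta^J$ a nonnegative $\mathbb F$-martingale with $\eta^J_0=1$. Here $\Lambda^{i}:=\Lambda^{\{i\}}$, $\eta^i:=\eta^{\{i\}}$. *)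

(* Defs.v *)
From HB Require Import structures.
From mathcomp Require Import all_boot all_order all_algebra.
From mathcomp Require Import all_classical all_reals all_analysis.
Set Implicit Arguments. Unset Strict Implicit. Unset Printing Implicit Defensive.
Import Order.TTheory GRing.Theory Num.Theory.
Import numFieldNormedType.Exports.
Local Open Scope classical_set_scope.
Local Open Scope ring_scope.

Section Defs.
Context {d : measure_display} {Ω : measurableType d} {R : realType}.
Variable P : probability Ω R.

(* Time is [0, +oo); processes are functions R -> Ω -> R, only their values
   at times t >= 0 matter. *)

Definition usual_filtration (F : R -> set (set Ω)) :=
  [/\ (forall t, 0 <= t -> sigma_algebra setT (F t) /\ F t `<=` measurable),
      (forall s t, 0 <= s -> s <= t -> F s `<=` F t),
      (forall t, 0 <= t -> F t = \bigcap_(s in `]t, +oo[) F s) &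
      (forall N, measurable N -> P N = 0%E -> forall A, A `<=` N -> F 0 A)].

Definition F_inf (F : R -> set (set Ω)) : set (set Ω) :=
  smallest (sigma_algebra setT) (\bigcup_(t in [set t : R | 0 <= t]) F t).

Definition measurable_wrt (G : set (set Ω)) (Y : Ω -> R) :=
  forall B : set R, measurable B -> G (Y @^-1` B).

Definition adapted (F : R -> set (set Ω)) (X : R -> Ω -> R) :=
  forall t, 0 <= t -> measurable_wrt (F t) (X t).

Definition cadlag (X : R -> Ω -> R) :=
  forall w t, 0 <= t ->
    (X ^~ w @ t^'+ --> X t w) /\ (0 < t -> cvg (X ^~ w @ t^'-)).

Definition increasing_proc (X : R -> Ω -> R) :=
  forall w s t, 0 <= s -> s <= t -> X s w <= X t w.

Definition jump (X : R -> Ω -> R) (t : R) (w : Ω) : R :=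
  if 0 < t then X t w - lim (X ^~ w @ t^'-) else 0.

Definition cont_part (X : R -> Ω -> R) (t : R) (w : Ω) : R :=
  X t w - fine (\esum_(s in `]0, t]) (jump X s w)%:E).

Definition Iproc (X : R -> Ω -> R) (t : R) (w : Ω) : R :=
  fine (\esum_(s in `]0, t]) (1 - expR (- jump X s w))%:E).

Definition martingale (F : R -> set (set Ω)) (M : R -> Ω -> R) :=
  [/\ adapted F M,
      (forall t, 0 <= t -> P.-integrable setT (EFin \o M t)) &
      (forall s t, 0 <= s -> s <= t -> forall A, F s A ->
         (\int[P]_(w in A) (M t w)%:E = \int[P]_(w in A) (M s w)%:E)%E)].

Definition stopping_time (F : R -> set (set Ω)) (T : Ω -> \bar R) :=
  (forall w, (0 <= T w)%E) /\
  (forall t, 0 <= t -> F t [set w | (T w <= t%:E)%E]).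

Definition stopped (M : R -> Ω -> R) (T : Ω -> \bar R) (t : R) (w : Ω) : R :=
  M (match T w with EFin r => Num.min t r | _ => t end) w.

Definition local_martingale (F : R -> set (set Ω)) (M : R -> Ω -> R) :=
  exists T : nat -> Ω -> \bar R,
    [/\ (forall n, stopping_time F (T n)),
        (forall n w, (T n w <= T n.+1 w)%E),
        {ae P, forall w, forall r : R, exists n, (r%:E < T n w)%E} &
        (forall n, martingale F (stopped M (T n)))].

Definition tau (X : R -> Ω -> R) (Θ : Ω -> R) (w : Ω) : \bar R :=
  ereal_inf [set t%:E | t in [set t : R | 0 <= t /\ Θ w <= X t w]].

Definition unit_exponential (Θ : Ω -> R) :=
  measurable_fun setT Θ /\
  forall x : R, 0 <= x -> P [set w | x < Θ w] = (expR (- x))%:E.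

Definition indep_Theta (F : R -> set (set Ω)) (Θ1 Θ2 : Ω -> R) :=
  forall A (B1 B2 : set R), F_inf F A -> measurable B1 -> measurable B2 ->
    P (A `&` Θ1 @^-1` B1 `&` Θ2 @^-1` B2)
    = (P A * P (Θ1 @^-1` B1) * P (Θ2 @^-1` B2))%E.

(* Standing assumptions for K^J, with K^{J,c} = c (deterministic),
   A^{I^J} = A (deterministic, predictable finite-variation part of the
   canonical decomposition of I^J), Lambda^J = c + A continuous, and
   exp(-K^J_t) = eta^J_t exp(-Lambda^J_t) with eta^J a nonnegative martingale,
   eta^J_0 = 1. *)
Definition standing (F : R -> set (set Ω)) (K : R -> Ω -> R)
    (c A : R -> R) (η : R -> Ω -> R) :=
  [/\ (forall w t, 0 <= t -> cont_part K t w = c t),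
      A 0 = 0 /\ (forall t, 0 <= t -> bounded_variation 0 t A),
      local_martingale F (fun t w => Iproc K t w - A t),
      {within `[0, +oo[, continuous (fun t => c t + A t)} &
      [/\ martingale F η, (forall t w, 0 <= t -> 0 <= η t w),
          (forall w, η 0 w = 1) &
          (forall t w, 0 <= t -> expR (- K t w) = η t w * expR (- (c t + A t)))]].

Definition cond_prob_version (G : set (set Ω)) (E : set Ω) (Y : Ω -> R) :=
  [/\ measurable_wrt G Y, P.-integrable setT (EFin \o Y) &
      forall A, G A -> P (A `&` E) = (\int[P]_(w in A) (Y w)%:E)%E].

End Defs.

(* Main.v *)
Require Import Defs.
From HB Require Import structures.
From mathcomp Require Import all_boot all_order all_algebra.
From mathcomp Require Import all_classical all_reals all_analysis.
From mathcomp Require Import measurable_realfun.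
From mathcomp Require Import ring lra.
Import Order.TTheory GRing.Theory Num.Theory.
Import numFieldNormedType.Exports.
Local Open Scope classical_set_scope.
Local Open Scope ring_scope.

Lemma tau_gt (R : realType) (d : measure_display) (Ω : measurableType d)
  (K : R -> Ω -> R) (Θ : Ω -> R) (w : Ω) (t : R) :
  0 <= t -> (K ^~ w @ t^'+ --> K t w) ->
  (forall s, 0 <= s -> s <= t -> K s w <= K t w) ->
  ((t%:E < tau K Θ w)%E <-> K t w < Θ w).
Proof.
move=> t0 rc mono; split.
- move=> H; rewrite ltNge; apply/negP => HK.
  have : (tau K Θ w <= t%:E)%E.
    by apply: ge_ereal_inf; exists t%:E => //; exists t.
  by rewrite leNgt H.
- move=> HK; rewrite ltNge; apply/negP => Hle.
  have Hn : \forall x \near t^'+, K x w < Θ w by exact: (cvgr_lt _ rc _ HK).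
  suff HH : ~ (\forall x \near t^'+, K x w < Θ w) by exact: HH Hn.
  apply/(not_near_at_rightP t (fun x => K x w < Θ w)) => e.
  have : ~ (forall s, 0 <= s -> Θ w <= K s w -> t + e%:num <= s).
    move=> H; move: Hle; apply/negP; rewrite -ltNge.
    apply: (@lt_le_trans _ _ (t + e%:num)%:E); first by rewrite lte_fin ltrDl.
    by apply: le_ereal_inf_tmp => _ [s [s0 hs] <-]; rewrite lee_fin; exact: H.
  move=> /existsNP [s] /not_implyP [s0] /not_implyP [hs] /negP; rewrite -ltNge => hst.
  exists s; last by apply/negP; rewrite -leNgt.
  rewrite hst andbT; rewrite ltNge; apply/negP => hst'.
  have h := mono s s0 hst'.
  by have := lt_le_trans (le_lt_trans h HK) hs; rewrite ltxx.
Qed.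

Section helpers.
Context {d : measure_display} {Ω : measurableType d} {R : realType}.
Context (P : probability Ω R).

Lemma sigI (G : set (set Ω)) A B : sigma_algebra setT G -> G A -> G B -> G (A `&` B).
Proof.
move=> [G0 GC GU] GA GB.
have GU2 X Y : G X -> G Y -> G (X `|` Y).
  move=> GX GY; have -> : X `|` Y = \bigcup_k (if k is 0%N then X else Y).
    apply/seteqP; split => [w [Xw|Yw]|w [[|k] _ h]];
      [by exists 0%N|by exists 1%N|by left|by right].
  by apply: GU => -[|k].
have -> : A `&` B = setT `\` ((setT `\` A) `|` (setT `\` B)).
  by rewrite !setTD -setCI setCK.
by apply: (GC); apply: GU2; apply: (GC).
Qed.

Lemma wrt_meas (G : set (set Ω)) (f : Ω -> R) :
  G `<=` measurable -> measurable_wrt G f -> measurable_fun setT f.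
Proof. by move=> sG mf _ Y mY; rewrite setTI; apply: sG; exact: mf. Qed.

Definition cell (X : Ω -> R) (δ : R) (j : nat) :=
  X @^-1` `[j%:R * δ, j.+1%:R * δ[.

Lemma cellG (G : set (set Ω)) X δ j : measurable_wrt G X -> G (cell X δ j).
Proof. by move=> mX; apply: mX; exact: measurable_itv. Qed.

Lemma cell_meas X δ j : measurable_fun setT X -> measurable (cell X δ j).
Proof. by move=> mX; rewrite -[cell _ _ _]setTI; apply: mX => //; exact: measurable_itv. Qed.

Lemma cell_triv X δ : 0 < δ -> trivIset setT (cell X δ).
Proof.
move=> δ0 i j _ _ [w []]; rewrite /cell /= !in_itv /= => /andP[hi1 hi2] /andP[hj1 hj2].
have h1 : (i < j.+1)%N by rewrite -(ltr_nat R) -(ltr_pM2r δ0); exact: le_lt_trans hi1 hj2.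
have h2 : (j < i.+1)%N by rewrite -(ltr_nat R) -(ltr_pM2r δ0); exact: le_lt_trans hj1 hi2.
by apply/eqP; rewrite eqn_leq -ltnS h1 -ltnS h2.
Qed.

Lemma cell_cover X δ : 0 < δ -> (forall w, 0 <= X w) -> \bigcup_j cell X δ j = setT.
Proof.
move=> δ0 X0; apply/seteqP; split => // w _.
have h : 0 <= X w / δ by rewrite divr_ge0 // ltW.
have /andP[h1 h2] := truncn_itv h.
exists (Num.truncn (X w / δ)) => //; rewrite /cell /= in_itv /=.
by rewrite -ler_pdivlMr // -ltr_pdivrMr // h1 h2.
Qed.

Local Open Scope ereal_scope.

Lemma part_bound (m1 m2 : set Ω -> \bar R) (C : nat -> set Ω) S (κ : R) :
  (0 <= κ)%R -> (forall i, 0 <= m1 (S `&` C i)) -> (forall i, 0 <= m2 (S `&` C i)) ->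
  m1 S = \sum_(i <oo) m1 (S `&` C i) -> m2 S = \sum_(i <oo) m2 (S `&` C i) ->
  (forall i, m1 (S `&` C i) <= κ%:E * m2 (S `&` C i)) -> m1 S <= κ%:E * m2 S.
Proof.
move=> k0 h1 h2 -> -> hb; rewrite -nneseriesZl //.
by apply: lee_nneseries => // i _ _.
Qed.

Lemma sumP (S E : set Ω) (C : nat -> set Ω) : measurable S -> measurable E -> (forall i, measurable (C i)) ->
  trivIset setT C -> \bigcup_i C i = setT ->
  P (S `&` E) = \sum_(i <oo) P ((S `&` C i) `&` E).
Proof.
move=> mS mE mC tC cC.
have -> : S `&` E = \bigcup_i ((S `&` C i) `&` E).
  by rewrite -setI_bigcupl -setI_bigcupr cC setIT.
rewrite measure_bigcup //=.
- by apply: eq_eseriesl => i; rewrite in_setT.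
- by move=> i _; apply: measurableI => //; apply: measurableI.
- by apply: trivIset_setIr; apply: trivIset_setIl.
Qed.

Lemma sumI (S : set Ω) (f : Ω -> \bar R) (C : nat -> set Ω) : measurable S -> measurable_fun setT f ->
  (forall x, 0 <= f x) -> (forall i, measurable (C i)) ->
  trivIset setT C -> \bigcup_i C i = setT ->
  \int[P]_(x in S) f x = \sum_(i <oo) \int[P]_(x in S `&` C i) f x.
Proof.
move=> mS mf f0 mC tC cC.
have {1}-> : S = \bigcup_i (S `&` C i) by rewrite -setI_bigcupr cC setIT.
apply: ge0_integral_bigcup => //.
- by move=> i; apply: measurableI.
- exact: measurable_funS mf.
- exact: trivIset_setIl.
Qed.

Local Close Scope ereal_scope.
Lemma exp_squeeze (a b : R) : 0 <= b ->
  (forall δ, 0 < δ -> a <= expR δ * b) -> a <= b.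
Proof.
move=> b0 H; apply/ler_addgt0Pr => e e0.
have b1 : 0 < b + 1 by rewrite ltr_wpDl.
have he : 1 < 1 + e / (b + 1) by rewrite ltrDl divr_gt0.
have := H _ (ln_gt0 he); rewrite lnK; last by rewrite posrE (lt_trans _ he).
move=> /le_trans; apply; rewrite mulrDl mul1r lerD2l.
rewrite mulrAC ler_pdivrMr // ler_pM2l //.
by rewrite lerDl.
Qed.

Lemma exp_squeezeE (a b : \bar R) : (0 <= a)%E -> b \is a fin_num -> (0 <= b)%E ->
  (forall δ, 0 < δ -> (a <= (expR δ)%:E * b)%E) -> (a <= b)%E.
Proof.
move: a b => [a| |] [b| |] //= a0 _ b0 H.
- rewrite lee_fin; apply: exp_squeeze => //; rewrite -lee_fin => δ δ0.
  exact: H.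
Qed.

Lemma mexpN (X : Ω -> R) : measurable_fun setT X ->
  measurable_fun setT (fun w => expR (- X w)).
Proof.
move=> mX.
exact: (measurableT_comp (f := expR) (g := fun w => - X w) (@measurable_expR R) (measurable_funN mX)).
Qed.

Lemma mlt (f g : Ω -> R) : measurable_fun setT f -> measurable_fun setT g ->
  measurable [set w | f w < g w].
Proof.
move=> mf mg.
have -> : [set w | f w < g w] = setT `&` (g \- f) @^-1` `]0, +oo[.
  apply/seteqP; split => w /=; rewrite in_itv /= andbT subr_gt0 //.
  by case.
by apply: measurable_funB => //; exact: measurable_itv.
Qed.

Lemma preim_gt (Θ : Ω -> R) x : Θ @^-1` `]x, +oo[ = [set w | x < Θ w].
Proof. by apply/seteqP; split => w /=; rewrite in_itv /= andbT. Qed.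

Lemma exp_shift (j : nat) (ε : R) :
  expR (- (j%:R * ε)) = expR ε * expR (- (j.+1%:R * ε)).
Proof. by rewrite -expRD; congr expR; rewrite -natr1; ring. Qed.

Local Open Scope ereal_scope.

Lemma partA (G : set (set Ω)) (Θ1 Θ2 X Y : Ω -> R) :
  sigma_algebra setT G -> G `<=` measurable ->
  measurable_fun setT Θ1 -> measurable_fun setT Θ2 ->
  (forall S B1 B2, G S -> measurable B1 -> measurable B2 ->
      P (S `&` Θ1 @^-1` B1 `&` Θ2 @^-1` B2) = P S * P (Θ1 @^-1` B1) * P (Θ2 @^-1` B2)) ->
  (forall x, (0 <= x)%R -> P [set w | x < Θ1 w]%R = (expR (- x))%:E) ->
  (forall x, (0 <= x)%R -> P [set w | x < Θ2 w]%R = (expR (- x))%:E) ->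
  measurable_wrt G X -> measurable_wrt G Y -> (forall w, 0 <= X w)%R -> (forall w, 0 <= Y w)%R ->
  forall A, G A ->
  P (A `&` ([set w | X w < Θ1 w] `&` [set w | Y w < Θ2 w]))%R =
    \int[P]_(w in A) (expR (- X w) * expR (- Y w))%:E.
Proof.
move=> sG sGm mT1 mT2 ind e1 e2 mX mY X0 Y0.
have mXm := wrt_meas _ _ sGm mX; have mYm := wrt_meas _ _ sGm mY.
set E := [set w | _] `&` [set w | _].
have mE : measurable E by apply: measurableI; apply: mlt => //.
set f := fun w => (expR (- X w) * expR (- Y w))%:E.
have mf : measurable_fun setT f.
  by apply/measurable_EFinP; apply: measurable_funM; apply: mexpN.
have f0 w : 0 <= f w by rewrite lee_fin mulr_ge0 // expR_ge0.
pose m1 S := P (S `&` E).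
pose m2 S := \int[P]_(w in S) f w.
have cellb (ε : R) S j k : (0 < ε)%R -> G S -> S `<=` cell X ε j -> S `<=` cell Y ε k ->
    m1 S <= (expR (ε + ε))%:E * m2 S /\ m2 S <= (expR (ε + ε))%:E * m1 S.
  move=> ε0 GS SX SY; have mS := sGm _ GS.
  set lo := (expR (- (j.+1%:R * ε)) * expR (- (k.+1%:R * ε)))%R.
  set hi := (expR (- (j%:R * ε)) * expR (- (k%:R * ε)))%R.
  have hilo : hi = (expR (ε + ε) * lo)%R.
    by rewrite /hi /lo (exp_shift j) (exp_shift k) expRD; ring.
  have hP x : (0 <= x)%R -> measurable (Θ1 @^-1` `]x, +oo[) /\ measurable (Θ2 @^-1` `]x, +oo[).
    move=> _; split; rewrite -[_ @^-1` _]setTI.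
      by apply: mT1 => //; exact: measurable_itv.
    by apply: mT2 => //; exact: measurable_itv.
  have indx x y : (0 <= x)%R -> (0 <= y)%R ->
      P (S `&` Θ1 @^-1` `]x, +oo[ `&` Θ2 @^-1` `]y, +oo[) = (expR (- x) * expR (- y))%:E * P S.
    move=> x0 y0; rewrite ind //; try exact: measurable_itv.
    by rewrite !preim_gt e1 // e2 // EFinM -muleA muleC.
  have jx : (0 <= j%:R * ε)%R by rewrite mulr_ge0 // ltW.
  have kx : (0 <= k%:R * ε)%R by rewrite mulr_ge0 // ltW.
  have jx' : (0 <= j.+1%:R * ε)%R by rewrite mulr_ge0 // ltW.
  have kx' : (0 <= k.+1%:R * ε)%R by rewrite mulr_ge0 // ltW.
  have m1hi : m1 S <= hi%:E * P S.
    rewrite /m1 -indx //; apply: le_measure; rewrite ?inE.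
    - exact: measurableI.
    - apply: measurableI; first apply: measurableI => //.
      + by have [] := hP _ jx.
      + by have [] := hP _ kx.
    - move=> w [Sw [/= h1 h2]]; have /= := SX _ Sw; have /= := SY _ Sw.
      rewrite /cell /= !in_itv /= => /andP[a1 a2] /andP[b1 b2].
      split; first split => //.
      + by rewrite andbT (le_lt_trans b1 h1).
      + by rewrite andbT (le_lt_trans a1 h2).
  have m1lo : lo%:E * P S <= m1 S.
    rewrite /m1 -indx //; apply: le_measure; rewrite ?inE.
    - apply: measurableI; first apply: measurableI => //.
      + by have [] := hP _ jx'.
      + by have [] := hP _ kx'.
    - exact: measurableI.
    - move=> w [[Sw h1] h2]; have /= := SX _ Sw; have /= := SY _ Sw.
      move: h1 h2; rewrite /cell /= !in_itv /= !andbT => h1 h2 /andP[a1 a2] /andP[b1 b2].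
      by split => //; split; [exact: lt_trans h1|exact: lt_trans h2].
  have m2hi : m2 S <= hi%:E * P S.
    rewrite /m2 -(integral_cst P mS); apply: ge0_le_integral => //.
    - exact: (measurable_funS measurableT (@subsetT _ _) mf).
    - move=> w Sw; have /= := SX _ Sw; have /= := SY _ Sw.
      rewrite /cell /= !in_itv /= => /andP[a1 a2] /andP[b1 b2].
      rewrite /f lee_fin ler_pM ?expR_ge0 //; rewrite ler_expR lerN2 //.
  have m2lo : lo%:E * P S <= m2 S.
    rewrite /m2 -(integral_cst P mS); apply: ge0_le_integral => //.
    - by move=> w _; rewrite lee_fin mulr_ge0 // expR_ge0.
    - exact: (measurable_funS measurableT (@subsetT _ _) mf).
    - move=> w Sw; have /= := SX _ Sw; have /= := SY _ Sw.
      rewrite /cell /= !in_itv /= => /andP[a1 a2] /andP[b1 b2].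
      rewrite /f lee_fin ler_pM ?expR_ge0 //; rewrite ler_expR lerN2 ltW //.
  split.
  - apply: (le_trans m1hi); rewrite hilo EFinM -muleA.
    by apply: lee_wpmul2l => //; rewrite lee_fin expR_ge0.
  - apply: (le_trans m2hi); rewrite hilo EFinM -muleA.
    by apply: lee_wpmul2l => //; rewrite lee_fin expR_ge0.
have mcell Z ε j : measurable_wrt G Z -> measurable (cell Z ε j).
  by move=> mZ; apply: sGm; exact: cellG.
have m10 S : 0 <= m1 S by [].
have m20 S : 0 <= m2 S by apply: integral_ge0 => w _; exact: f0.
have key ε S : (0 < ε)%R -> G S ->
    m1 S <= (expR (ε + ε))%:E * m2 S /\ m2 S <= (expR (ε + ε))%:E * m1 S.
  move=> ε0.
  have step2 S' j : G S' -> S' `<=` cell X ε j ->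
      m1 S' <= (expR (ε + ε))%:E * m2 S' /\ m2 S' <= (expR (ε + ε))%:E * m1 S'.
    move=> GS SX; have mS := sGm _ GS.
    have sum1 : m1 S' = \sum_(i <oo) m1 (S' `&` cell Y ε i).
      apply: sumP => //; [by move=> i; exact: mcell|exact: cell_triv|exact: cell_cover].
    have sum2 : m2 S' = \sum_(i <oo) m2 (S' `&` cell Y ε i).
      apply: sumI => //; [by move=> i; exact: mcell|exact: cell_triv|exact: cell_cover].
    have cb i := cellb ε (S' `&` cell Y ε i) j i ε0 (sigI _ _ _ sG GS (cellG _ _ _ _ mY))
       (subset_trans (@subIsetl _ _ _) SX) (@subIsetr _ _ _).
    split; [apply: (part_bound _ _ (cell Y ε)) | apply: (part_bound _ _ (cell Y ε))] => //;
      by [rewrite expR_ge0| move=> i; case: (cb i)].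
  move=> GS; have mS := sGm _ GS.
  have sum1 : m1 S = \sum_(i <oo) m1 (S `&` cell X ε i).
    apply: sumP => //; [by move=> i; exact: mcell|exact: cell_triv|exact: cell_cover].
  have sum2 : m2 S = \sum_(i <oo) m2 (S `&` cell X ε i).
    apply: sumI => //; [by move=> i; exact: mcell|exact: cell_triv|exact: cell_cover].
  have cb i := step2 (S `&` cell X ε i) i (sigI _ _ _ sG GS (cellG _ _ _ _ mX)) (@subIsetr _ _ _).
  split; [apply: (part_bound _ _ (cell X ε)) | apply: (part_bound _ _ (cell X ε))] => //;
    by [rewrite expR_ge0| move=> i; case: (cb i)].
move=> A GA; have mA := sGm _ GA.
have fin1 : m1 A \is a fin_num by apply: fin_num_measure; exact: measurableI.
have fin2 : m2 A \is a fin_num.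
  rewrite ge0_fin_numE; last exact: (m20 A).
  apply: (@le_lt_trans _ _ (1%:E * P A)).
    rewrite -(integral_cst P mA); apply: ge0_le_integral => //; first exact: (measurable_funS measurableT (@subsetT _ _) mf).
    move=> w _; rewrite /f lee_fin -[1%R]mulr1 ler_pM ?expR_ge0 //;
      by rewrite -expR0 ler_expR lerNl oppr0.
  rewrite mul1e; exact: (le_lt_trans (probability_le1 P mA) (ltry 1)).
have key' δ : (0 < δ)%R -> m1 A <= (expR δ)%:E * m2 A /\ m2 A <= (expR δ)%:E * m1 A.
  move=> δ0; have two0 : (0 < 2 :> R)%R by [].
  have := key (δ / 2)%R A (divr_gt0 δ0 two0) GA.
  by rewrite -splitr.
apply/le_anti/andP; split.
- apply: exp_squeezeE; [exact: (m10 A)|exact: fin2|exact: (m20 A)|] => δ δ0.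
  by case: (key' δ δ0).
- apply: exp_squeezeE; [exact: (m20 A)|exact: fin1|exact: (m10 A)|] => δ δ0.
  by case: (key' δ δ0).
Qed.


Lemma intZ (S : set Ω) (h : Ω -> R) (k : R) : measurable S -> measurable_fun setT h ->
  (forall w, 0 <= h w)%R -> (0 <= k)%R ->
  \int[P]_(w in S) (k * h w)%:E = k%:E * \int[P]_(w in S) (h w)%:E.
Proof.
move=> mS mh h0 k0.
transitivity (\int[P]_(w in S) (k%:E * (h w)%:E)).
  by apply: eq_integral => w _; rewrite EFinM.
apply: ge0_integralZl_EFin => //.
- by move=> w _; rewrite lee_fin.
- by apply/measurable_EFinP; exact: (measurable_funS measurableT (@subsetT _ _) mh).
Qed.

Lemma mEFin (S : set Ω) (h : Ω -> R) : measurable_fun setT h ->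
  measurable_fun S (fun w => (h w)%:E).
Proof.
by move=> mh; apply/measurable_EFinP; exact: (measurable_funS measurableT (@subsetT _ _) mh).
Qed.

Lemma partB (G : set (set Ω)) (X g1 g2 : Ω -> R) (c : R) :
  sigma_algebra setT G -> G `<=` measurable -> measurable_wrt G X -> (forall w, 0 <= X w)%R ->
  measurable_fun setT g1 -> measurable_fun setT g2 -> (forall w, 0 <= g1 w)%R -> (forall w, 0 <= g2 w)%R ->
  (forall w, g1 w <= c)%R -> (forall w, g2 w <= c)%R ->
  (forall S, G S -> \int[P]_(w in S) (g1 w)%:E = \int[P]_(w in S) (g2 w)%:E) ->
  forall A, G A -> \int[P]_(w in A) (expR (- X w) * g1 w)%:E = \int[P]_(w in A) (expR (- X w) * g2 w)%:E.
Proof.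
move=> sG sGm mX X0 mg1 mg2 g10 g20 g1c g2c geq.
have mXm := wrt_meas _ _ sGm mX.
have cellB (h1 h2 : Ω -> R) ε S j : measurable_fun setT h1 -> measurable_fun setT h2 ->
    (forall w, 0 <= h1 w)%R -> (forall w, 0 <= h2 w)%R ->
    (forall S, G S -> \int[P]_(w in S) (h1 w)%:E = \int[P]_(w in S) (h2 w)%:E) ->
    (0 < ε)%R -> G S -> S `<=` cell X ε j ->
    \int[P]_(w in S) (expR (- X w) * h1 w)%:E <= (expR ε)%:E * \int[P]_(w in S) (expR (- X w) * h2 w)%:E.
  move=> mh1 mh2 h10 h20 heq ε0 GS SX; have mS := sGm _ GS.
  apply: (@le_trans _ _ (\int[P]_(w in S) (expR (- (j%:R * ε)) * h1 w)%:E)).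
    apply: ge0_le_integral => //.
    - by move=> w _; rewrite lee_fin mulr_ge0 ?expR_ge0.
    - apply: mEFin; apply: measurable_funM => //; exact: mexpN.
    - apply: mEFin; apply: measurable_funM => //; exact: measurable_cst.
    - move=> w Sw; have /= := SX _ Sw; rewrite /cell /= in_itv /= => /andP[a1 a2].
      by rewrite lee_fin ler_wpM2r // ler_expR lerN2.
  rewrite intZ ?expR_ge0 // heq // exp_shift EFinM -muleA -intZ ?expR_ge0 //.
  apply: lee_wpmul2l; first by rewrite lee_fin expR_ge0.
  apply: ge0_le_integral => //.
  - by move=> w _; rewrite lee_fin mulr_ge0 ?expR_ge0.
  - apply: mEFin; apply: measurable_funM => //; exact: measurable_cst.
  - apply: mEFin; apply: measurable_funM => //; exact: mexpN.
  - move=> w Sw; have /= := SX _ Sw; rewrite /cell /= in_itv /= => /andP[a1 a2].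
    by rewrite lee_fin ler_wpM2r // ler_expR lerN2 ltW.
set m1 := fun S => \int[P]_(w in S) (expR (- X w) * g1 w)%:E.
set m2 := fun S => \int[P]_(w in S) (expR (- X w) * g2 w)%:E.
have mf1 : measurable_fun setT (fun w => (expR (- X w) * g1 w)%:E).
  by apply: mEFin; apply: measurable_funM => //; exact: mexpN.
have mf2 : measurable_fun setT (fun w => (expR (- X w) * g2 w)%:E).
  by apply: mEFin; apply: measurable_funM => //; exact: mexpN.
have f10 w : 0 <= (expR (- X w) * g1 w)%:E by rewrite lee_fin mulr_ge0 ?expR_ge0.
have f20 w : 0 <= (expR (- X w) * g2 w)%:E by rewrite lee_fin mulr_ge0 ?expR_ge0.
have m10 S : 0 <= m1 S by apply: integral_ge0 => w _; exact: f10.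
have m20 S : 0 <= m2 S by apply: integral_ge0 => w _; exact: f20.
have mcell ε j : measurable (cell X ε j) by apply: sGm; exact: cellG.
move=> A GA; have mA := sGm _ GA.
have key δ : (0 < δ)%R -> m1 A <= (expR δ)%:E * m2 A /\ m2 A <= (expR δ)%:E * m1 A.
  move=> δ0.
  have sum1 : m1 A = \sum_(i <oo) m1 (A `&` cell X δ i).
    apply: sumI => //; [exact: cell_triv|exact: cell_cover].
  have sum2 : m2 A = \sum_(i <oo) m2 (A `&` cell X δ i).
    apply: sumI => //; [exact: cell_triv|exact: cell_cover].
  have GAi i : G (A `&` cell X δ i) by apply: sigI => //; exact: cellG.
  split; [apply: (part_bound _ _ (cell X δ)) | apply: (part_bound _ _ (cell X δ))] => //.
  - move=> i; exact: (cellB g1 g2 δ (A `&` cell X δ i) i mg1 mg2 g10 g20 geq δ0 (GAi i) (@subIsetr _ _ _)).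
  - move=> i; apply: (cellB g2 g1 δ (A `&` cell X δ i) i mg2 mg1 g20 g10 _ δ0 (GAi i) (@subIsetr _ _ _)).
    by move=> S GS; rewrite geq.
have finc (g : Ω -> R) : (forall w, 0 <= g w)%R -> (forall w, g w <= c)%R -> measurable_fun setT g ->
    \int[P]_(w in A) (expR (- X w) * g w)%:E \is a fin_num.
  move=> g0 gc mg.
  rewrite ge0_fin_numE; last by apply: integral_ge0 => w _; rewrite lee_fin mulr_ge0 ?expR_ge0.
  have c0 : (0 <= c)%R by apply: le_trans (gc point).
  apply: (@le_lt_trans _ _ (c%:E * P A)).
    rewrite -(integral_cst P mA); apply: ge0_le_integral => //.
    - by move=> w _; rewrite lee_fin mulr_ge0 ?expR_ge0.
    - by apply: mEFin; apply: measurable_funM => //; exact: mexpN.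
    - move=> w _; rewrite /= lee_fin -[c]mul1r ler_pM ?expR_ge0 //.
      by rewrite -expR0 ler_expR lerNl oppr0.
  rewrite -(@fineK _ (P A)) ?fin_num_measure // -EFinM; exact: ltry.
apply/le_anti/andP; split.
- apply: exp_squeezeE; [exact: (m10 A)|exact: finc|exact: (m20 A)|] => δ δ0.
  by case: (key δ δ0).
- apply: exp_squeezeE; [exact: (m20 A)|exact: finc|exact: (m10 A)|] => δ δ0.
  by case: (key δ δ0).
Qed.


Lemma main_case (F : R -> set (set Ω)) (K1 K2 : R -> Ω -> R) (Θ1 Θ2 : Ω -> R)
  (η2 η12 : R -> Ω -> R) (L2 L12 : R -> R) (t1 t2 t : R) :
  (forall s, (0 <= s)%R -> sigma_algebra setT (F s) /\ F s `<=` measurable) ->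
  (forall s u, (0 <= s)%R -> (s <= u)%R -> F s `<=` F u) ->
  adapted F K1 -> adapted F K2 ->
  (forall s w, (0 <= s)%R -> (0 <= K1 s w)%R) -> (forall s w, (0 <= s)%R -> (0 <= K2 s w)%R) ->
  measurable_fun setT Θ1 -> measurable_fun setT Θ2 ->
  (forall s S B1 B2, (0 <= s)%R -> F s S -> measurable B1 -> measurable B2 ->
      P (S `&` Θ1 @^-1` B1 `&` Θ2 @^-1` B2) = P S * P (Θ1 @^-1` B1) * P (Θ2 @^-1` B2)) ->
  (forall x, (0 <= x)%R -> P [set w | x < Θ1 w]%R = (expR (- x))%:E) ->
  (forall x, (0 <= x)%R -> P [set w | x < Θ2 w]%R = (expR (- x))%:E) ->
  martingale P F η2 -> (forall s w, (0 <= s)%R -> (0 <= η2 s w)%R) ->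
  (forall s w, (0 <= s)%R -> expR (- K2 s w) = η2 s w * expR (- L2 s))%R ->
  martingale P F η12 -> (forall s w, (0 <= s)%R -> (0 <= η12 s w)%R) ->
  (forall s w, (0 <= s)%R -> expR (- (K1 s w + K2 s w)) = η12 s w * expR (- L12 s))%R ->
  (0 <= t)%R -> (t <= t1)%R -> (t1 <= t2)%R ->
  forall A, F t A ->
  P (A `&` ([set w | K1 t1 w < Θ1 w] `&` [set w | K2 t2 w < Θ2 w]))%R =
  \int[P]_(w in A) ((expR (- L2 t2 - (L12 t1 - L2 t1)) * η12 t w)%:E).
Proof.
move=> hF mono aK1 aK2 K10 K20 mT1 mT2 ind e1 e2 [a2 i2 mart2] η20 dec2
  [a12 i12 mart12] η120 dec12 t0 tt1 t12 A FA.
have t10 : (0 <= t1)%R by exact: le_trans tt1.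
have t20 : (0 <= t2)%R by exact: le_trans t12.
have [sG2 sGm2] := hF t2 t20; have [sG1 sGm1] := hF t1 t10; have [sG sGm] := hF t t0.
have FA1 : F t1 A by exact: mono t t1 t0 tt1 A FA.
have FA2 : F t2 A by exact: mono t1 t2 t10 t12 A FA1.
have mX2 : measurable_wrt (F t2) (K1 t1).
  by move=> B mB; apply: (mono t1 t2 t10 t12); exact: aK1.
rewrite (partA (F t2) Θ1 Θ2 (K1 t1) (K2 t2) sG2 sGm2 mT1 mT2 (fun S B1 B2 => ind t2 S B1 B2 t20)
  e1 e2 mX2 (aK2 t2 t20) (fun w => K10 t1 w t10) (fun w => K20 t2 w t20) A FA2).
set Δ := (L2 t2 - L2 t1)%R.
pose g1 w := expR (- K2 t2 w).
pose g2 w := (expR (- Δ) * expR (- K2 t1 w))%R.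
have mK21 := wrt_meas _ _ sGm1 (aK2 t1 t10).
have mK22 := wrt_meas _ _ sGm2 (aK2 t2 t20).
have mg1 : measurable_fun setT g1 by exact: mexpN.
have mg2 : measurable_fun setT g2.
  by apply: measurable_funM => //; exact: mexpN.
have mη s : (0 <= s)%R -> measurable_fun setT (η2 s).
  move=> s0; exact: (wrt_meas _ _ (hF s s0).2 (a2 s s0)).
have mη12 s : (0 <= s)%R -> measurable_fun setT (η12 s).
  move=> s0; exact: (wrt_meas _ _ (hF s s0).2 (a12 s s0)).
have geq S : F t1 S -> \int[P]_(w in S) (g1 w)%:E = \int[P]_(w in S) (g2 w)%:E.
  move=> FS; have mS := sGm1 _ FS.
  transitivity (\int[P]_(w in S) (expR (- L2 t2) * η2 t2 w)%:E).
    by apply: eq_integral => w _; rewrite /g1 dec2 // mulrC.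
  rewrite (intZ S (η2 t2) (expR (- L2 t2)) mS (mη t2 t20) (fun w => η20 t2 w t20) (expR_ge0 _)).
  rewrite (mart2 t1 t2 t10 t12 S FS).
  rewrite -(intZ S (η2 t1) (expR (- L2 t2)) mS (mη t1 t10) (fun w => η20 t1 w t10) (expR_ge0 _)).
  apply: eq_integral => w _; rewrite /g2 dec2 // mulrCA -expRD mulrC.
  have -> : (- Δ - L2 t1 = - L2 t2)%R by rewrite /Δ; ring.
  by [].
have g1c w : (g1 w <= 1 + expR (- Δ))%R.
  rewrite /g1 (@le_trans _ _ 1%R) //; first by rewrite -expR0 ler_expR lerNl oppr0 K20.
  by rewrite lerDl expR_ge0.
have g2c w : (g2 w <= 1 + expR (- Δ))%R.
  rewrite /g2 (@le_trans _ _ (expR (- Δ))) //; last by rewrite lerDr.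
  rewrite -[X in (_ <= X)%R]mulr1 ler_wpM2l ?expR_ge0 //.
  by rewrite -expR0 ler_expR lerNl oppr0 K20.
have := partB (F t1) (K1 t1) g1 g2 (1 + expR (- Δ)) sG1 sGm1 (aK1 t1 t10) (fun w => K10 t1 w t10)
  mg1 mg2 (fun w => expR_ge0 _) (fun w => mulr_ge0 (expR_ge0 _) (expR_ge0 _)) g1c g2c geq A FA1.
rewrite /g1 => ->.
transitivity (\int[P]_(w in A) ((expR (- L2 t2 - (L12 t1 - L2 t1)) * η12 t1 w)%:E)).
  apply: eq_integral => w _; rewrite /g2 mulrCA -expRD -opprD dec12 // mulrCA -expRD mulrC.
  have -> : (- Δ + - L12 t1 = - L2 t2 - (L12 t1 - L2 t1))%R by rewrite /Δ; ring.
  by [].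
have mA := sGm _ FA.
rewrite (intZ A (η12 t1) _ mA (mη12 t1 t10) (fun w => η120 t1 w t10) (expR_ge0 _)).
rewrite (mart12 t t1 t0 tt1 A FA).
by rewrite -(intZ A (η12 t) _ mA (mη12 t t0) (fun w => η120 t w t0) (expR_ge0 _)).
Qed.

End helpers.

Theorem theorem3p1 (R : realType) (d : measure_display) (Ω : measurableType d)
  (P : probability Ω R) (F : R -> set (set Ω))
  (K1 K2 : R -> Ω -> R) (Θ1 Θ2 : Ω -> R)
  (c1 c2 c12 A1 A2 A12 : R -> R) (η1 η2 η12 : R -> Ω -> R) :
  usual_filtration P F ->
  adapted F K1 -> cadlag K1 -> increasing_proc K1 -> (forall w, K1 0 w = 0) ->
  adapted F K2 -> cadlag K2 -> increasing_proc K2 -> (forall w, K2 0 w = 0) ->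
  unit_exponential P Θ1 -> unit_exponential P Θ2 -> indep_Theta P F Θ1 Θ2 ->
  standing P F K1 c1 A1 η1 ->
  standing P F K2 c2 A2 η2 ->
  standing P F (fun t w => K1 t w + K2 t w) c12 A12 η12 ->
  let L1 := fun t => c1 t + A1 t in
  let L2 := fun t => c2 t + A2 t in
  let L12 := fun t => c12 t + A12 t in
  forall t1 t2 t : R, 0 <= t -> t <= Num.min t1 t2 ->
    cond_prob_version P (F t)
      [set w | (t1%:E < tau K1 Θ1 w)%E /\ (t2%:E < tau K2 Θ2 w)%E]
      (fun w => (if t1 <= t2
                 then expR (- L2 t2 - (L12 t1 - L2 t1))
                 else expR (- L1 t1 - (L12 t2 - L1 t2))) * η12 t w).
Proof.
move=> hF aK1 cK1 iK1 K10 aK2 cK2 iK2 K20 [mT1 e1] [mT2 e2] hind st1 st2 st12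
  L1 L2 L12 t1 t2 t t0 tmin.
case: hF => hFs hmono _ _.
case: st1 => _ _ _ _ [mart1 η10 _ dec1].
case: st2 => _ _ _ _ [mart2 η20 _ dec2].
case: st12 => _ _ _ _ [mart12 η120 _ dec12].
have K1p s w : 0 <= s -> 0 <= K1 s w by move=> s0; rewrite -(K10 w); exact: iK1.
have K2p s w : 0 <= s -> 0 <= K2 s w by move=> s0; rewrite -(K20 w); exact: iK2.
have ind s S B1 B2 : 0 <= s -> F s S -> measurable B1 -> measurable B2 ->
    P (S `&` Θ1 @^-1` B1 `&` Θ2 @^-1` B2) = (P S * P (Θ1 @^-1` B1) * P (Θ2 @^-1` B2))%E.
  move=> s0 FS mB1 mB2; apply: hind => //.
  by rewrite /F_inf; apply: sub_sigma_algebra; exists s.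
have ind' s S B1 B2 : 0 <= s -> F s S -> measurable B1 -> measurable B2 ->
    P (S `&` Θ2 @^-1` B1 `&` Θ1 @^-1` B2) = (P S * P (Θ2 @^-1` B1) * P (Θ1 @^-1` B2))%E.
  by move=> s0 FS mB1 mB2; rewrite setIAC (ind s) // muleAC.
move: tmin; rewrite le_min => /andP[tt1 tt2].
have t10 : 0 <= t1 by exact: le_trans tt1.
have t20 : 0 <= t2 by exact: le_trans tt2.
have Eeq : [set w | (t1%:E < tau K1 Θ1 w)%E /\ (t2%:E < tau K2 Θ2 w)%E] =
    [set w | K1 t1 w < Θ1 w] `&` [set w | K2 t2 w < Θ2 w].
  apply/seteqP; split => w /= [h1 h2]; split.
  - exact/(tau_gt _ _ _ K1 Θ1 w t1 t10 (cK1 w t1 t10).1 (fun s s0 st => iK1 w s t1 s0 st)).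
  - exact/(tau_gt _ _ _ K2 Θ2 w t2 t20 (cK2 w t2 t20).1 (fun s s0 st => iK2 w s t2 s0 st)).
  - exact/(tau_gt _ _ _ K1 Θ1 w t1 t10 (cK1 w t1 t10).1 (fun s s0 st => iK1 w s t1 s0 st)).
  - exact/(tau_gt _ _ _ K2 Θ2 w t2 t20 (cK2 w t2 t20).1 (fun s s0 st => iK2 w s t2 s0 st)).
set C := if t1 <= t2 then _ else _.
have [a12 i12 _] := mart12.
split.
- move=> B mB.
  have := measurable_funM (measurable_cst C) (@measurable_id _ _ setT) measurableT mB.
  rewrite setTI => h; exact: (a12 t t0 _ h).
- exact: (integrableZl measurableT C (i12 t t0)).
- move=> A FA; rewrite Eeq /C; case: leP => h.
  + exact: (main_case P F K1 K2 Θ1 Θ2 η2 η12 L2 L12 t1 t2 t hFs hmono aK1 aK2 K1p K2p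
      mT1 mT2 ind e1 e2 mart2 η20 dec2 mart12 η120 dec12 t0 tt1 h A FA).
  + rewrite (setIC [set w | K1 t1 w < Θ1 w]).
    apply: (main_case P F K2 K1 Θ2 Θ1 η1 η12 L1 L12 t2 t1 t hFs hmono aK2 aK1 K2p K1p
      mT2 mT1 ind' e2 e1 mart1 η10 dec1 mart12 η120 _ t0 tt2 (ltW h) A FA).
    by move=> s w s0; rewrite addrC; exact: dec12.
Qed.
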